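(* Let $0<a\le 1$ and let $x^1,\dots,x^T\in[a,1]^N$ be price relative vectors with $\max_i x^t_i=1$ for all $t$. Let $w^1\in\Delta^N$ have all entries positive, let $0<\eta\le 1$, and define $$w^{t+1}=w^t\odot\big(\mathbb{1}-\eta\,\Pi_{w^t}\nabla f^t\big),\qquad \nabla f^t=-\frac{x^t}{w^t\cdot x^t},\qquad (\Pi_{w^t}\nabla f^t)_i=\nabla_i f^t-w^t\cdot\nabla f^t.$$ Then for every $u\in\Delta^N$, $$\sum_{t=1}^T\log(u\cdot x^t)-\sum_{t=1}^T\log(w^t\cdot x^t)\le\frac{D(u\,|\,w^1)}{\eta}+\frac{T\eta}{2a^2(1-\eta)}.$$ In particular, taking $w^1=(1/N,\ldots,1/N)$ and $\eta=\frac{a\sqrt{2\log N}}{a\sqrt{2\log N}+\sqrt{T}}$ gives, for every $u\in\Delta^N$, $$\sum_{t=1}^T\log(u\cdot x^t)-\sum_{t=1}^T\log(w^t\cdot x^t)\le\frac{\sqrt{2T\log N}}{a}+\log N.$$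
   Context: $\Delta^N=\{w\in\mathbb{R}^N : \sum_i w_i=1,\ w_i\ge 0\}$; $\odot$ is componentwise multiplication and $\mathbb{1}$ the all-ones vector. The relative entropy is $D(u\,|\,w)=\sum_{i:\,u_i\ne0}u_i\log(u_i/w_i)$. *)

(* Defs.v *)
From HB Require Import structures.
From mathcomp Require Import all_boot all_order all_algebra.
From mathcomp Require Import all_classical all_reals exp.
Set Implicit Arguments. Unset Strict Implicit. Unset Printing Implicit Defensive.
Import Order.TTheory GRing.Theory Num.Theory.
Local Open Scope ring_scope.

Section Defs.
Variables (R : realType) (N : nat).
Implicit Types (w u x g : 'I_N -> R).

Definition dot w x : R := \sum_(i < N) w i * x i.

Definition simplex w : Prop := (forall i, 0 <= w i) /\ \sum_(i < N) w i = 1.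

Definition relent u w : R := \sum_(i < N | u i != 0) u i * ln (u i / w i).

(* gradient of f^t(w) = - log (w . x) : -x / (w . x) *)
Definition grad w x : 'I_N -> R := fun i => - (x i / dot w x).

Definition proj w g : 'I_N -> R := fun i => g i - dot w g.

Definition eg_step (eta : R) w x : 'I_N -> R :=
  fun i => w i * (1 - eta * proj w (grad w x) i).

(* weights t = w^{t+1}; x t = x^{t+1} (0-based indices) *)
Fixpoint weights (eta : R) (w1 : 'I_N -> R) (x : nat -> 'I_N -> R) (t : nat)
  : 'I_N -> R :=
  match t with
  | 0 => w1
  | t'.+1 => eg_step eta (weights eta w1 x t') (x t')
  end.

End Defs.

(* Main.v *)
Require Import Defs.
From HB Require Import structures.
From mathcomp Require Import all_boot all_order all_algebra.
From mathcomp Require Import all_classical all_reals exp.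
From mathcomp Require Import topology normedtype derive realfun.
From mathcomp Require Import lra ring.
Import Order.TTheory GRing.Theory Num.Theory.
Import numFieldNormedType.Exports.
Local Open Scope ring_scope.
Local Open Scope classical_set_scope.

Lemma ln_quad (R : realType) (y : R) : 1 <= y -> (4 * y - y ^+ 2 - 3) / 2 <= ln y.
Proof.
move=> y1.
pose f := fun z : R => ln z + z ^+ 2 / 2 - 2 * z.
have D (z : R) : 0 < z -> is_derive z 1 f (z^-1 + z - 2).
  move=> z0; rewrite /f.
  apply: is_derive_eq.
  apply: is_deriveB.
  apply: is_deriveD.
  exact: is_derive1_ln.
  rewrite scaler0 add0r /=.
  change (z^-1 + 2^-1 * (z * 1 + z * 1) - 2 * 1 = z^-1 + z - 2).
  rewrite !mulr1; lra.
have C : {within `[1, +oo[, continuous f}.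
  apply: derivable_within_continuous => z; rewrite in_itv /= andbT => z1.
  apply: ex_derive; apply: D; exact: lt_le_trans z1.
have H (z : R) : 1 < z -> 0 < z by move=> h; apply: lt_trans h.
have key : f 1 <= f y.
  apply: (@ger0_derive1_ndecry R f 1) => //.
    move=> z; rewrite in_itv /= andbT => z1; apply: ex_derive; apply: D; exact: H.
  move=> z; rewrite in_itv /= andbT => z1.
  have dz := D z (H z z1); rewrite derive1E derive_val.
  have z0 := H z z1.
  have -> : z^-1 + z - 2 = (z - 1) ^+ 2 / z by field; rewrite gt_eqF.
  by apply: divr_ge0; [apply: sqr_ge0 | apply: ltW].
move: key; rewrite /f ln1 expr1n; lra.
Qed.

Lemma coord_bound (R : realType) (a eta r : R) : 0 < a -> a <= 1 -> 0 < eta -> eta < 1 ->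
  a <= r -> r <= a^-1 ->
  eta * (r - 1) <= ln (1 + eta * (r - 1)) + eta * (eta / (2 * a ^+ 2 * (1 - eta))).
Proof.
move=> a0 a1 e0 e1 ar ra.
set K := eta / (2 * a ^+ 2 * (1 - eta)).
set z := eta * (r - 1).
have P0 : 0 < 2 * a ^+ 2 * (1 - eta).
  by rewrite mulr_gt0 ?mulr_gt0 ?exprn_gt0 // subr_gt0.
have hK : eta * K * (2 * a ^+ 2 * (1 - eta)) = eta ^+ 2.
  by rewrite /K; field; rewrite -?mulrA ?mulf_neq0 ?gt_eqF // ?exprn_gt0 // subr_gt0.
have ar1 : a * r <= 1.
  by rewrite -(mulfV (lt0r_neq0 a0)) ler_wpM2l // ltW.
have r0 : 0 < r by apply: lt_le_trans ar.
have y0 : 0 < 1 + z by rewrite /z; nra.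
have eK : 0 <= eta * K by rewrite /K; apply: mulr_ge0; apply: ltW => //; apply: divr_gt0.
have az : a * z <= eta by rewrite /z; nra.
have zl : - (eta * (1 - a)) <= z by rewrite /z; nra.
clearbody z K.
case: (leP 0 z) => hz.
- have hl : (4 * (1 + z) - (1 + z) ^+ 2 - 3) / 2 <= ln (1 + z).
    by apply: ln_quad; rewrite lerDl.
  suff : z ^+ 2 / 2 <= eta * K by move=> ?; nra.
  rewrite -(ler_pM2r P0) hK.
  have : (a * z) ^+ 2 <= eta ^+ 2 by rewrite ler_sqr ?nnegrE; nra.
  nra.
- have hl : 1 - (1 + z)^-1 <= ln (1 + z).
    have := @le_ln1Dx R ((1 + z)^-1 - 1).
    rewrite [1 + (_ - 1)]addrC subrK lnV ?posrE //.
    have : 0 < (1 + z)^-1 by rewrite invr_gt0.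
    move=> h1 h2; have h3 : -1 < (1 + z)^-1 - 1 by lra.
    have := h2 h3; move: (ln (1 + z)) ((1 + z)^-1) => l v h; by rewrite -(opprB v 1) lerNl.
  set q := z ^+ 2 / (1 + z).
  have hq : q * (1 + z) = z ^+ 2 by rewrite /q mulfVK ?gt_eqF.
  have e1z : 1 + (1 + z)^-1 * z = (1 + z)^-1 * (1 + z) + (1 + z)^-1 * z.
    by rewrite mulVf ?gt_eqF.
  have hq2 : z - ln (1 + z) <= q.
    suff E : z - (1 - (1 + z)^-1) = q by rewrite -E lerD2l lerN2.
    rewrite /q; field; rewrite gt_eqF //.
  suff : q <= eta * K by lra.
  rewrite -(ler_pM2r P0) hK.
  have q0 : 0 <= q by rewrite /q divr_ge0 ?sqr_ge0 // ltW.
  have : z ^+ 2 <= (eta * (1 - a)) ^+ 2.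
    rewrite -sqrrN ler_sqr ?nnegrE; nra.
  have : q * (1 - eta) <= q * (1 + z) by rewrite ler_wpM2l //; nra.
  have : (a * (1 - a)) ^+ 2 <= 1 / 2.
    have : a * (1 - a) <= 1/4 by have := sqr_ge0 (a - 1/2); nra.
    have : 0 <= a * (1 - a) by nra.
    nra.
  nra.
Qed.

Lemma relentE (R : realType) (N : nat) (u w : 'I_N -> R) :
  relent u w = \sum_(i < N) u i * ln (u i / w i).
Proof.
rewrite /relent [RHS](bigID (fun i => u i != 0)) /= [X in _ + X]big1 ?addr0 //.
by move=> i /negPn/eqP ->; rewrite mul0r.
Qed.

Lemma dot_bounds (R : realType) (N : nat) (a : R) (w x : 'I_N -> R) :
  simplex w -> (forall i, a <= x i <= 1) -> a <= dot w x <= 1.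
Proof.
move=> [w0 w1] hx; apply/andP; split; rewrite /dot.
  apply: (@le_trans _ _ (\sum_(i < N) w i * a)).
    by rewrite -mulr_suml w1 mul1r.
  by apply: ler_sum => i _; rewrite ler_wpM2l //; case/andP: (hx i).
rewrite -w1; apply: ler_sum => i _.
by rewrite -[X in _ <= X]mulr1 ler_wpM2l //; case/andP: (hx i).
Qed.

Lemma eg_stepE (R : realType) (N : nat) (eta : R) (w x : 'I_N -> R) :
  \sum_(i < N) w i = 1 -> dot w x != 0 ->
  forall i, eg_step eta w x i = w i * (1 + eta * (x i / dot w x - 1)).
Proof.
move=> w1 s0 i; rewrite /eg_step /Defs.proj.
have -> : dot w (grad w x) = -1.
  rewrite /dot /grad.
  under eq_bigr => j _ do rewrite mulrN mulrA.
  by rewrite sumrN -mulr_suml -/(dot w x) mulfV.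
rewrite /grad; congr (_ * _); ring.
Qed.

Lemma step_simplex (R : realType) (N : nat) (a eta : R) (w x : 'I_N -> R) :
  0 < a -> 0 < eta -> eta < 1 -> (forall i, a <= x i <= 1) ->
  simplex w -> (forall i, 0 < w i) ->
  simplex (eg_step eta w x) /\ (forall i, 0 < eg_step eta w x i).
Proof.
move=> a0 e0 e1 hx [w0 w1] wp.
have /andP[sa s1] := @dot_bounds _ _ a w x (conj w0 w1) hx.
have s0 : 0 < dot w x by apply: lt_le_trans sa.
have E := @eg_stepE _ _ eta w x w1 (lt0r_neq0 s0).
have pos i : 0 < eg_step eta w x i.
  rewrite E mulr_gt0 //.
  have xi0 : 0 <= x i by case/andP: (hx i) => h _; exact: le_trans (ltW a0) h.
  have : 0 <= x i / dot w x by rewrite divr_ge0 // ltW.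
  nra.
split => //; split; first by move=> i; apply: ltW.
under eq_bigr => i _ do rewrite E mulrDr mulr1 mulrCA mulrBr mulr1.
rewrite big_split /= w1 -mulr_sumr sumrB w1.
under eq_bigr => i _ do rewrite mulrA.
by rewrite -mulr_suml -/(dot w x) mulfV ?subrr ?mulr0 ?addr0 // lt0r_neq0.
Qed.

Lemma relent_ge0 (R : realType) (N : nat) (u w : 'I_N -> R) :
  simplex u -> simplex w -> (forall i, 0 < w i) -> 0 <= relent u w.
Proof.
move=> [u0 u1] [w0 w1] wp; rewrite relentE.
apply: (@le_trans _ _ (\sum_(i < N) (u i - w i))).
  by rewrite sumrB u1 w1 subrr.
apply: ler_sum => i _.
case: (eqVneq (u i) 0) => [->|ui0]; first by rewrite mul0r sub0r oppr_le0.
have ui : 0 < u i by rewrite lt_def ui0 u0.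
have h := @le_ln1Dx R (w i / u i - 1).
rewrite [1 + (_ - 1)]addrC subrK in h.
have h1 : -1 < w i / u i - 1 by have := divr_gt0 (wp i) ui; move=> hh; rewrite ltrBrDr addNr.
have {}h := h h1.
have h2 : u i * ln (w i / u i) <= w i - u i.
  have e : w i - u i = u i * (w i / u i - 1).
    by rewrite mulrBr mulr1 mulrCA mulfV ?mulr1 // lt0r_neq0.
  by rewrite e ler_wpM2l // ltW.
rewrite -invf_div lnV ?posrE ?divr_gt0 // mulrN.
by rewrite lerNr opprB.
Qed.

Lemma step_regret (R : realType) (N : nat) (a eta : R) (u w x : 'I_N -> R) :
  0 < a -> a <= 1 -> 0 < eta -> eta < 1 -> (forall i, a <= x i <= 1) ->
  simplex u -> simplex w -> (forall i, 0 < w i) ->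
  ln (dot u x) - ln (dot w x) <=
    (relent u w - relent u (eg_step eta w x)) / eta + eta / (2 * a ^+ 2 * (1 - eta)).
Proof.
move=> a0 a1 e0 e1 hx [u0 u1] [w0 w1] wp.
have /andP[sa s1] := @dot_bounds _ _ a w x (conj w0 w1) hx.
have /andP[ua u1'] := @dot_bounds _ _ a u x (conj u0 u1) hx.
set s := dot w x.
have s0 : 0 < s by apply: lt_le_trans sa.
have ux0 : 0 < dot u x by apply: lt_le_trans ua.
have E := @eg_stepE _ _ eta w x w1 (lt0r_neq0 s0).
set K := eta / (2 * a ^+ 2 * (1 - eta)).
have hr i : a <= x i / s /\ x i / s <= a^-1.
  have /andP[xa x1] := hx i.
  split.
    rewrite ler_pdivlMr //; apply: le_trans xa.
    by rewrite -[X in _ <= X]mulr1 ler_wpM2l // ltW.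
  rewrite ler_pdivrMr //; apply: le_trans x1 _.
  by rewrite -(mulVf (lt0r_neq0 a0)) ler_wpM2l // invr_ge0 ltW.
have yp i : 0 < 1 + eta * (x i / s - 1).
  have [h _] := hr i.
  have : 0 < x i / s by apply: lt_le_trans h.
  nra.
have hD : relent u w - relent u (eg_step eta w x) =
    \sum_(i < N) u i * ln (1 + eta * (x i / s - 1)).
  rewrite !relentE -sumrB; apply: eq_bigr => i _.
  rewrite E -mulrBr.
  case: (eqVneq (u i) 0) => [->|ui0]; first by rewrite !mul0r.
  have ui : 0 < u i by rewrite lt_def ui0 u0.
  congr (_ * _).
  rewrite -/s invfM mulrA [ln (_ / (1 + _))]ln_div ?posrE ?divr_gt0 //.
  ring.
have hS : dot u x / s - 1 = \sum_(i < N) u i * (x i / s - 1).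
  under eq_bigr => i _ do rewrite mulrBr mulr1 mulrA.
  by rewrite sumrB -mulr_suml u1.
have hlog : ln (dot u x) - ln s <= dot u x / s - 1.
  rewrite -ln_div ?posrE //.
  have h := @le_ln1Dx R (dot u x / s - 1).
  rewrite [1 + (_ - 1)]addrC subrK in h; apply: h.
  have := divr_gt0 ux0 s0; move=> hh; by rewrite ltrBrDr addNr.
have hsum : eta * (dot u x / s - 1) <=
    (relent u w - relent u (eg_step eta w x)) + eta * K.
  rewrite hS hD mulr_sumr.
  apply: (@le_trans _ _ (\sum_(i < N) u i * (ln (1 + eta * (x i / s - 1)) + eta * K))).
    apply: ler_sum => i _; rewrite mulrCA; apply: ler_wpM2l => //.
    by have [h1 h2] := hr i; apply: coord_bound.
  under eq_bigr => i _ do rewrite mulrDr.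
  by rewrite big_split /= -mulr_suml u1 mul1r.
apply: (le_trans hlog).
have : dot u x / s - 1 <= (relent u w - relent u (eg_step eta w x) + eta * K) / eta.
  by rewrite ler_pdivlMr // mulrC.
by rewrite mulrDl [eta * K]mulrC mulfK // lt0r_neq0.
Qed.

Lemma relent_unif (R : realType) (N : nat) (u : 'I_N -> R) :
  simplex u -> relent u (fun _ => (N%:R)^-1) <= ln N%:R.
Proof.
move=> [u0 u1]; rewrite relentE.
apply: (@le_trans _ _ (\sum_(i < N) u i * ln N%:R)); last first.
  by rewrite -mulr_suml u1 mul1r.
apply: ler_sum => i _.
case: (eqVneq (u i) 0) => [->|ui0]; first by rewrite !mul0r.
have ui : 0 < u i by rewrite lt_def ui0 u0.
have ui1 : u i <= 1.
  by rewrite -u1 (bigD1 i) //= lerDl sumr_ge0.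

have Nr : 0 < (N%:R : R) by rewrite ltr0n; case: (N) i {ui0 ui ui1} => [[]|].
rewrite ler_wpM2l ?(ltW ui) // invrK ler_ln ?posrE ?mulr_gt0 //.
exact: ler_piMl (ltW Nr) ui1.
Qed.

Theorem theorem5p2 (R : realType) (N T : nat) (a : R) (x : nat -> 'I_N -> R) :
  0 < a -> a <= 1 ->
  (forall t i, (t < T)%N -> a <= x t i /\ x t i <= 1) ->
  (forall t, (t < T)%N -> exists i, x t i = 1) ->
  (forall (w1 : 'I_N -> R) (eta : R),
     simplex w1 -> (forall i, 0 < w1 i) -> 0 < eta -> eta < 1 ->
     forall u : 'I_N -> R, simplex u ->
       \sum_(t < T) ln (dot u (x t)) - \sum_(t < T) ln (dot (weights eta w1 x t) (x t))
         <= relent u w1 / eta + T%:R * eta / (2 * a ^+ 2 * (1 - eta)))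
  /\
  (let w1 := fun _ : 'I_N => (N%:R)^-1 in
   let eta := a * Num.sqrt (2 * ln N%:R) / (a * Num.sqrt (2 * ln N%:R) + Num.sqrt T%:R) in
   forall u : 'I_N -> R, simplex u ->
     \sum_(t < T) ln (dot u (x t)) - \sum_(t < T) ln (dot (weights eta w1 x t) (x t))
       <= Num.sqrt (2 * T%:R * ln N%:R) / a + ln N%:R).
Proof.
move=> a0 a1 hx _.
have P1 : forall (w1 : 'I_N -> R) (eta : R),
     simplex w1 -> (forall i, 0 < w1 i) -> 0 < eta -> eta < 1 ->
     forall u : 'I_N -> R, simplex u ->
       \sum_(t < T) ln (dot u (x t)) - \sum_(t < T) ln (dot (weights eta w1 x t) (x t))
         <= relent u w1 / eta + T%:R * eta / (2 * a ^+ 2 * (1 - eta)).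
  move=> w1 eta hw1 hw1p e0 e1 u hu.
  set W := weights eta w1 x.
  set K := eta / (2 * a ^+ 2 * (1 - eta)).
  have hxb n : (n < T)%N -> forall i, a <= x n i <= 1.
    by move=> hn i; have [h1 h2] := hx n i hn; apply/andP.
  have inv n : (n <= T)%N -> simplex (W n) /\ (forall i, 0 < W n i).
    elim: n => [|n IH] hn; first by [].
    have [hs hp] := IH (ltnW hn).
    exact: (@step_simplex _ _ a eta (W n) (x n) a0 e0 e1 (hxb n hn) hs hp).
  have main n : (n <= T)%N ->
      \sum_(t < n) (ln (dot u (x t)) - ln (dot (W t) (x t)))
        <= (relent u w1 - relent u (W n)) / eta + n%:R * K.
    elim: n => [|n IH] hn.
      by rewrite big_ord0 /= subrr !mul0r addr0.
    rewrite big_ord_recr /=.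
    have [hs hp] := inv n (ltnW hn).
    have st := @step_regret _ _ a eta u (W n) (x n) a0 a1 e0 e1 (hxb n hn) hu hs hp.
    apply: le_trans (lerD (IH (ltnW hn)) st) _.
    have -> : (n.+1)%:R = n%:R + 1 :> R by rewrite -addn1 natrD.
    rewrite -/K le_eqVlt; apply/orP; left; apply/eqP.
    rewrite /W /=; ring.
  rewrite -sumrB; apply: le_trans (main T (leqnn T)) _.
  rewrite /K mulrA lerD2r ler_pM2r ?invr_gt0 // gerBl.
  by have [hs hp] := inv T (leqnn T); apply: relent_ge0.
split; first exact: P1.
move=> w1 eta u hu.
have hN : (0 < N)%N.
  case: (posnP N) => // N0; move: hu => [_]; move: u; rewrite N0 => u.
  by rewrite big_ord0 => /eqP; rewrite eq_sym oner_eq0.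
case: (ltnP 1 N) => hN2.
  have L0 : 0 < ln (N%:R : R) by rewrite ln_gt0 // ltr1n.
  case: (posnP T) => hT.
    move: hx P1; rewrite hT => _ _.
    rewrite !big_ord0 subrr mulr0 mul0r sqrtr0 mul0r add0r; exact: ltW.
  have hw1 : simplex w1.
    split; first by move=> i; rewrite /w1 invr_ge0 ler0n.
    rewrite /w1 sumr_const card_ord.
    have -> : (N%:R : R)^-1 *+ N = (N%:R)^-1 * N%:R by rewrite mulr_natr.
    rewrite mulVf //.
    by rewrite pnatr_eq0 -lt0n.
  have hw1p : forall i, 0 < w1 i by move=> i; rewrite /w1 invr_gt0 ltr0n.
  have q0 : 0 < Num.sqrt (2 * ln (N%:R : R)) by rewrite sqrtr_gt0 mulr_gt0.
  have s0 : 0 < Num.sqrt (T%:R : R) by rewrite sqrtr_gt0 ltr0n.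
  have e0 : 0 < eta by rewrite /eta divr_gt0 ?addr_gt0 ?mulr_gt0.
  have e1 : eta < 1.
    by rewrite /eta ltr_pdivrMr ?addr_gt0 ?mulr_gt0 // mul1r ltrDl.
  apply: le_trans (P1 w1 eta hw1 hw1p e0 e1 u hu) _.
  apply: le_trans (_ : _ <= ln N%:R / eta + T%:R * eta / (2 * a ^+ 2 * (1 - eta))) _.
    by rewrite lerD2r ler_pM2r ?invr_gt0 // /w1; exact: relent_unif.
  rewrite le_eqVlt; apply/orP; left; apply/eqP.
  have eS : Num.sqrt (2 * T%:R * ln (N%:R : R)) =
      Num.sqrt (2 * ln (N%:R : R)) * Num.sqrt (T%:R : R).
    by rewrite -mulrA [T%:R * _]mulrC mulrA sqrtrM // mulr_ge0 // ltW.
  rewrite eS /eta.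
  move: q0 s0.
  have eL : ln (N%:R : R) = Num.sqrt (2 * ln (N%:R : R)) ^+ 2 / 2.
    by rewrite sqr_sqrtr ?mulr_ge0 ?ltW // mulrAC mulfV ?mul1r // pnatr_eq0.
  have eT : (T%:R : R) = Num.sqrt (T%:R : R) ^+ 2 by rewrite sqr_sqrtr.
  move: (Num.sqrt (2 * ln (N%:R : R))) eL => q ->.
  move: (Num.sqrt (T%:R : R)) eT => s ->.
  move=> q0 s0.
  field.
  rewrite addrAC subrr add0r; apply/and4P; split; apply: lt0r_neq0 => //.
  by rewrite addr_gt0 ?mulr_gt0.
have N1 : N = 1%N by apply/eqP; rewrite eqn_leq hN2 hN.
subst N; case: hu => u0 u1.
have eta0 : eta = 0 by rewrite /eta mulr1n ln1 mulr0 sqrtr0 mulr0 mul0r.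
have Wc t : weights eta w1 x t = w1.
  elim: t => //= t ->; apply/funext => i.
  by rewrite /eg_step eta0 mul0r subr0 mulr1.
have hu1 : u ord0 = 1 by move: u1; rewrite big_ord1.
have E t : dot u (x t) = dot (weights eta w1 x t) (x t).
  by rewrite Wc /dot !big_ord1 hu1 /w1 mulr1n invr1.
under eq_bigr => t _ do rewrite E.
by rewrite subrr mulr1n ln1 mulr0 sqrtr0 mul0r addr0.
Qed.
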